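(* Let $\mu>0$ and let $X\sim\mathcal N(0,\sigma_X^2)$, $Y\sim\mathcal N(0,\sigma_Y^2)$ be independent with $\sigma_X^2+\sigma_Y^2>0$. Then $$\mathbb E\Big[\Big(1-\tanh^2\Big(\frac{X+Y}{\mu}\Big)\Big)X^2\mathbf 1_{\{X+Y>0\}}\Big]\le\frac1{\sqrt{2\pi}}\frac{\mu\sigma_X^2\sigma_Y^2}{(\sigma_X^2+\sigma_Y^2)^{3/2}}+\frac3{4\sqrt{2\pi}}\frac{\sigma_X^2\mu^3}{(\sigma_X^2+\sigma_Y^2)^{5/2}}(3\mu^2+4\sigma_X^2).$$ *)

(* Defs.v *)
From Stdlib Require Import Reals.
Open Scope R_scope.

Definition improper_int (f : R -> R) (l : R) : Prop :=
  (forall a b : R, exists pr : Riemann_integrable f a b, True) /\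
  (forall eps : R, 0 < eps -> exists M : R,
     forall (a b : R) (pr : Riemann_integrable f a b),
       a <= - M -> M <= b -> Rabs (RiemannInt pr - l) < eps).

Definition gauss_density (s2 x : R) : R :=
  exp (- (x ^ 2) / (2 * s2)) / sqrt (2 * PI * s2).

(* gauss_expect s2 f E : E = E[f(Z)] for Z ~ N(0, s2), s2 >= 0.
   For s2 = 0 the law is the Dirac mass at 0. *)
Definition gauss_expect (s2 : R) (f : R -> R) (E : R) : Prop :=
  (s2 = 0 /\ E = f 0) \/
  (0 < s2 /\ improper_int (fun x => f x * gauss_density s2 x) E).

Definition integrand (mu x y : R) : R :=
  (1 - (tanh ((x + y) / mu)) ^ 2) * x ^ 2 * (if Rlt_dec 0 (x + y) then 1 else 0).

(* Main.v *)
Require Import Defs.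
From Stdlib Require Import Reals Lra Psatz.
From Coquelicot Require Import Coquelicot.
Open Scope R_scope.


Definition sech2 (u : R) := 1 - tanh u ^ 2.

Lemma epos u : 0 < exp u + exp (- u).
Proof. pose proof (exp_pos u); pose proof (exp_pos (-u)); lra. Qed.

Lemma tanh_exp u : tanh u = (exp u - exp (- u)) / (exp u + exp (- u)).
Proof. unfold tanh, sinh, cosh. pose proof (epos u). field. lra. Qed.

Lemma sech2_exp u : sech2 u = 4 / (exp u + exp (- u)) ^ 2.
Proof.
  unfold sech2; rewrite tanh_exp. pose proof (epos u).
  pose proof (exp_pos u). rewrite exp_Ropp in *.
  assert (0 < / exp u) by (apply Rinv_0_lt_compat; lra).
  field; repeat split; nra.
Qed.

Lemma sech2_pos u : 0 < sech2 u.
Proof. rewrite sech2_exp. pose proof (epos u). apply Rdiv_lt_0_compat; [lra|]. apply pow_lt; lra. Qed.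

Lemma sech2_le_exp u : sech2 u <= 4 * exp (- (2 * u)).
Proof.
  rewrite sech2_exp. rewrite !exp_Ropp.
  replace (2 * u) with (u + u) by ring. rewrite exp_plus.
  pose proof (exp_pos u) as H. set (e := exp u) in *.
  assert (0 < / e) by (apply Rinv_0_lt_compat; lra).
  assert (E1 : 4 / (e + / e) ^ 2 = 4*(e*e)/((e*e+1)^2)) by (field; repeat split; nra).
  assert (E2 : 4 * / (e * e) - 4*(e*e)/((e*e+1)^2) = 4*(2*(e*e)+1)/((e*e)*(e*e+1)^2))
    by (field; repeat split; nra).
  assert (0 <= 4*(2*(e*e)+1)/((e*e)*(e*e+1)^2)).
  { apply Rlt_le, Rdiv_lt_0_compat; [nra|]. apply Rmult_lt_0_compat; [nra|]. apply pow_lt; nra. }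
  lra.
Qed.

Lemma sech2_le1 u : sech2 u <= 1.
Proof. unfold sech2. pose proof (pow2_ge_0 (tanh u)). lra. Qed.

Lemma is_derive_tanh u : is_derive tanh u (sech2 u).
Proof.
  rewrite sech2_exp.
  assert (Hf : forall x, tanh x = (exp x - exp (- x)) / (exp x + exp (- x))) by apply tanh_exp.
  eapply is_derive_ext. { intros t. symmetry. apply Hf. }
  pose proof (epos u).
  auto_derive. lra.
  pose proof (exp_pos u). rewrite exp_Ropp in *.
  assert (0 < / exp u) by (apply Rinv_0_lt_compat; lra).
  field; repeat split; nra.
Qed.

Lemma one_minus_tanh u : 0 <= u -> 1 - tanh u <= 1 / (1 + u).
Proof.
  intros Hu. rewrite tanh_exp. rewrite exp_Ropp.
  pose proof (exp_pos u) as H. set (e := exp u) in *.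
  assert (He2 : 1 + 2 * u <= e * e).
  { unfold e. rewrite <- exp_plus. destruct (Req_dec u 0) as [->|Hn].
    - rewrite Rplus_0_r, exp_0. lra.
    - left. replace (u+u) with (2*u) by ring. apply exp_ineq1. lra. }
  assert (0 < / e) by (apply Rinv_0_lt_compat; lra).
  replace (1 - (e - / e) / (e + / e)) with (2 / (e * e + 1)) by (field; nra).
  apply Rmult_le_reg_r with ((e*e+1)*(1+u)). nra.
  field_simplify; try lra; nra.
Qed.

Lemma tanh_le1 u : tanh u <= 1.
Proof. rewrite tanh_exp. pose proof (epos u). pose proof (exp_pos (-u)).
  apply Rmult_le_reg_r with (exp u + exp (-u)); auto. field_simplify; lra. Qed.

Lemma tanh_0 : tanh 0 = 0.
Proof. rewrite tanh_exp. rewrite Ropp_0. lra. Qed.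



Definition RI (f : R -> R) (a b : R) : R := @RInt R_CompleteNormedModule f a b.

Lemma dcont (f : R -> R) x : ex_derive f x -> continuous f x.
Proof. intros H. apply (@ex_derive_continuous R_AbsRing R_NormedModule f x H). Qed.

Lemma exRc (f : R -> R) a b :
  (forall z, Rmin a b <= z <= Rmax a b -> continuous f z) -> ex_RInt f a b.
Proof. intros H. exact (@ex_RInt_continuous R_CompleteNormedModule f a b H). Qed.

Lemma cmult (f g : R -> R) x : continuous f x -> continuous g x -> continuous (fun y => f y * g y) x.
Proof. intros H1 H2. exact (@continuous_mult R_UniformSpace R_AbsRing f g x H1 H2). Qed.

Lemma cplus (f g : R -> R) x : continuous f x -> continuous g x -> continuous (fun y => f y + g y) x.
Proof. intros H1 H2. exact (@continuous_plus R_UniformSpace R_AbsRing R_NormedModule f g x H1 H2). Qed.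

Lemma cminus (f g : R -> R) x : continuous f x -> continuous g x -> continuous (fun y => f y - g y) x.
Proof. intros H1 H2. exact (@continuous_minus R_UniformSpace R_AbsRing R_NormedModule f g x H1 H2). Qed.

Lemma RInt_extR (f g : R -> R) a b :
  (forall x, Rmin a b < x < Rmax a b -> f x = g x) -> RI f a b = RI g a b.
Proof. intros H. unfold RI. exact (@RInt_ext R_CompleteNormedModule f g a b H). Qed.


Ltac toR := match goal with |- @eq _ ?a ?b => change (@eq R a b) end.

Lemma RInt_plusR (f g : R -> R) a b : ex_RInt f a b -> ex_RInt g a b ->
  RI (fun x => f x + g x) a b = RI f a b + RI g a b.
Proof. intros H1 H2. unfold RI. exact (@RInt_plus R_CompleteNormedModule f g a b H1 H2). Qed.

Lemma RInt_scalR (f : R -> R) a b k : ex_RInt f a b ->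
  RI (fun x => k * f x) a b = k * RI f a b.
Proof. intros H1. unfold RI. exact (@RInt_scal R_CompleteNormedModule f a b k H1). Qed.

Lemma RInt_ChaslesR (f : R -> R) a b c : ex_RInt f a b -> ex_RInt f b c ->
  RI f a b + RI f b c = RI f a c.
Proof. intros H1 H2. unfold RI. exact (@RInt_Chasles R_CompleteNormedModule f a b c H1 H2). Qed.

Lemma RInt_deriv (f df : R -> R) a b :
  (forall x, Rmin a b <= x <= Rmax a b -> is_derive f x (df x)) ->
  (forall x, Rmin a b <= x <= Rmax a b -> continuous df x) ->
  RI df a b = f b - f a.
Proof.
  intros H1 H2. unfold RI. apply is_RInt_unique.
  exact (@is_RInt_derive R_CompleteNormedModule f df a b H1 H2).
Qed.

Lemma sech2_cont_pt u : continuous sech2 u.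
Proof.
  apply continuous_ext with (f := fun u => 4 / (exp u + exp (- u)) ^ 2).
  { intros; symmetry; apply sech2_exp. }
  apply dcont. auto_derive. pose proof (epos u). nra.
Qed.

Lemma sech2_cont_mu mu t : continuous (fun t => sech2 (t / mu)) t.
Proof.
  apply continuous_comp with (f := fun t => t / mu) (g := sech2).
  - apply dcont. auto_derive. auto.
  - apply sech2_cont_pt.
Qed.

Lemma RInt_sech2 mu A C : 0 < mu ->
  RI (fun t => sech2 (t / mu)) A C = mu * (tanh (C / mu) - tanh (A / mu)).
Proof.
  intros Hmu.
  replace (mu * (tanh (C / mu) - tanh (A / mu))) with
    (((fun t => mu * tanh (t / mu)) C) - ((fun t => mu * tanh (t / mu)) A)) by ring.
  apply (RInt_deriv (fun t => mu * tanh (t / mu))).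
  idtac.
  - intros x _.
    replace (sech2 (x / mu)) with (mu * (scal (/ mu) (sech2 (x / mu)))).
    2:{ unfold scal; simpl; unfold mult; simpl. field. lra. }
    apply is_derive_scal.
    apply is_derive_comp with (f := tanh) (g := fun t => t / mu).
    + apply is_derive_tanh.
    + auto_derive_fun (fun t : R => t / mu). 
      intros D. specialize (D x). replace (/ mu) with (1 / mu) by (field; lra).
      apply D. auto.
  - intros x _. apply sech2_cont_mu.
Qed.

Lemma sech2_sq_int mu T : 0 < mu -> 0 <= T ->
  RI (fun t => sech2 (t / mu) * t ^ 2) 0 T <= mu ^ 3.
Proof.
  intros Hmu HT.
  apply Rle_trans with (RI (fun t => 4 * exp (- (2 * (t / mu))) * t ^ 2) 0 T).
  - unfold RI. apply RInt_le; auto.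
    + apply exRc. intros z _.
      apply cmult. apply sech2_cont_mu. apply dcont; auto_derive; auto.
    + apply exRc. intros z _. apply dcont; auto_derive; auto.
    + intros x _. apply Rmult_le_compat_r. apply pow2_ge_0. apply sech2_le_exp.
  - rewrite (RInt_deriv (fun t => - exp (- (2 * (t / mu))) * (2 * mu * t ^ 2 + 2 * mu ^ 2 * t + mu ^ 3))).
    + assert (0 < exp (- (2 * (T / mu)))) by apply exp_pos.
      assert (0 <= 2 * mu * T ^ 2 + 2 * mu ^ 2 * T) by (apply Rplus_le_le_0_compat; apply Rmult_le_pos; try apply pow_le; nra).
      replace (2 * (0 / mu)) with 0 by (field; lra). rewrite Ropp_0, exp_0.
      assert (0 <= exp (- (2 * (T / mu))) * (2 * mu * T ^ 2 + 2 * mu ^ 2 * T + mu ^ 3)).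
      { apply Rmult_le_pos; [lra|]. pose proof (pow_lt mu 3 Hmu). lra. }
      nra.
    + intros x _. auto_derive; auto. unfold Rdiv. field; lra.
    + intros x _. apply dcont; auto_derive; auto.
Qed.


Ltac norm_exp := try unfold Rdiv; repeat match goal with |- context [exp ?a] => progress (ring_simplify a) end.

Lemma cpt_of (h : R -> R) x : ex_derive h x -> continuity_pt h x.
Proof. intros H. apply (proj2 (continuity_pt_filterlim h x)). apply dcont, H. Qed.

Lemma c2_1 (h : R -> R) x y : continuity_pt h x -> continuity_2d_pt (fun u v => h u) x y.
Proof. intros H. apply (continuity_1d_2d_pt_comp h (fun u v => u)); auto. apply continuity_2d_pt_id1. Qed.

Lemma c2_2 (h : R -> R) x y : continuity_pt h y -> continuity_2d_pt (fun u v => h v) x y.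
Proof. intros H. apply (continuity_1d_2d_pt_comp h (fun u v => v)); auto. apply continuity_2d_pt_id2. Qed.

Lemma c2_exp f x y : continuity_2d_pt f x y -> continuity_2d_pt (fun u v => exp (f u v)) x y.
Proof. intros H. apply (continuity_1d_2d_pt_comp exp f); auto.
  apply derivable_continuous_pt. apply derivable_pt_exp. Qed.

Lemma c2_comp (h : R -> R) f x y : continuity_pt h (f x y) -> continuity_2d_pt f x y ->
  continuity_2d_pt (fun u v => h (f u v)) x y.
Proof. intros. apply (continuity_1d_2d_pt_comp h f); auto. Qed.

Lemma is_derive_RInt0 (f : R -> R) a t :
  (forall z, continuous f z) -> is_derive (fun t => RI f a t) t (f t).
Proof.
  intros Hc. unfold RI. apply (@is_derive_RInt R_CompleteNormedModule f (fun t => RInt f a t) a t).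
  - apply filter_forall. intros b. apply (@RInt_correct R_CompleteNormedModule). apply exRc. intros; apply Hc.
  - apply Hc.
Qed.

Definition gI (t : R) := RI (fun x => exp (- (x ^ 2))) 0 t.
Definition gk (t u : R) := exp (- (t ^ 2 * (1 + u ^ 2))) / (1 + u ^ 2).
Definition gK (t : R) := RI (fun u => gk t u) 0 1.

Lemma gk_cont2 t u : continuity_2d_pt gk t u.
Proof.
  unfold gk. unfold Rdiv.
  apply continuity_2d_pt_mult.
  - apply c2_exp. apply continuity_2d_pt_opp. apply continuity_2d_pt_mult.
    + apply c2_1. apply cpt_of. auto_derive. auto.
    + apply c2_2. apply cpt_of. auto_derive. auto.
  - apply c2_2. apply cpt_of. auto_derive. pose proof (pow2_ge_0 u). lra.
Qed.

Lemma gk_der t u : is_derive (fun z => gk z u) t (- 2 * t * exp (- (t ^ 2 * (1 + u ^ 2)))).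
Proof.
  unfold gk. pose proof (pow2_ge_0 u). auto_derive. easy. norm_exp. field. lra.
Qed.

Lemma gK_der t : is_derive gK t (RI (fun u => - 2 * t * exp (- (t ^ 2 * (1 + u ^ 2)))) 0 1).
Proof.
  unfold gK.
  erewrite RInt_extR. unfold RI.
  2:{ intros x _. symmetry. apply is_derive_unique. apply gk_der. }
  apply (is_derive_RInt_param gk 0 1 t).
  - apply filter_forall. intros x0 u _. eexists. apply gk_der.
  - intros u _. apply continuity_2d_pt_ext with
      (f := fun x y => - 2 * x * exp (- (x ^ 2 * (1 + y ^ 2)))).
    { intros x y. symmetry. apply is_derive_unique. apply gk_der. }
    apply continuity_2d_pt_mult.
    + apply c2_1. apply cpt_of. auto_derive. auto.
    + apply c2_exp. apply continuity_2d_pt_opp. apply continuity_2d_pt_mult.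
      * apply c2_1. apply cpt_of. auto_derive. auto.
      * apply c2_2. apply cpt_of. auto_derive. auto.
  - apply filter_forall. intros y. apply exRc. intros z _.
    apply dcont. unfold gk. auto_derive. pose proof (pow2_ge_0 z). lra.
Qed.

Lemma gauss_cont z : continuous (fun x => exp (- (x ^ 2))) z.
Proof. apply dcont. auto_derive. auto. Qed.

Lemma gI_der t : is_derive gI t (exp (- (t ^ 2))).
Proof. unfold gI. apply (is_derive_RInt0 (fun x => exp (- (x ^ 2)))). apply gauss_cont. Qed.

Lemma gI_lin t : gI t = t * RI (fun u => exp (- ((t * u) ^ 2))) 0 1.
Proof.
  unfold gI, RI. toR.
  assert (H := RInt_comp_lin (V := R_CompleteNormedModule) (fun x => exp (- (x ^ 2))) t 0 0 1).
  replace (t * 0 + 0) with 0 in H by ring. replace (t * 1 + 0) with t in H by ring.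
  rewrite <- H.
  2:{ apply exRc. intros; apply gauss_cont. }
  rewrite <- (RInt_scal (V := R_CompleteNormedModule)).
  2:{ apply exRc. intros. apply dcont. auto_derive. auto. }
  apply (RInt_extR _ _ 0 1). intros x _. unfold scal; simpl; unfold mult; simpl. f_equal. f_equal. f_equal. ring.
Qed.

Definition gF t := gI t ^ 2 + gK t.

Lemma gF_der t : is_derive gF t 0.
Proof.
  unfold gF.
  replace 0 with (2 * gI t * exp (- (t ^ 2)) + RI (fun u => - 2 * t * exp (- (t ^ 2 * (1 + u ^ 2)))) 0 1).
  - apply (is_derive_plus (K := R_AbsRing) (V := R_NormedModule)).
    + replace (2 * gI t * exp (- (t ^ 2))) with (INR 2 * exp (- (t ^ 2)) * gI t ^ (pred 2)).
      2:{ simpl. ring. }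
      apply (is_derive_pow (fun t => gI t) 2 t). apply gI_der.
    + apply gK_der.
  - rewrite gI_lin.
    rewrite (RInt_extR (fun u => - 2 * t * exp (- (t ^ 2 * (1 + u ^ 2)))) (fun u => scal (- 2 * t * exp (- (t ^ 2))) (exp (- ((t * u) ^ 2))))).
    2:{ intros x _. change (scal (-2*t*exp(-(t^2))) (exp (-((t*x)^2)))) with
          ((-2*t*exp(-(t^2))) * (exp (-((t*x)^2)))).
        replace (-(t^2*(1+x^2))) with (-(t^2) + -((t*x)^2)) by ring. rewrite exp_plus. symmetry; apply Rmult_assoc. }
    change (fun u => scal (- 2 * t * exp (- (t ^ 2))) (exp (- ((t * u) ^ 2)))) with
      (fun u => (- 2 * t * exp (- (t ^ 2))) * (exp (- ((t * u) ^ 2)))).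
    rewrite RInt_scalR.
    2:{ apply exRc. intros. apply dcont. auto_derive. auto. }
    ring.
Qed.

Lemma gF_0 : gF 0 = PI / 4.
Proof.
  unfold gF, gI, gK. unfold RI at 1. rewrite RInt_point. unfold zero; simpl.
  rewrite (RInt_extR _ (fun u => / (1 + u ^ 2))).
  2:{ intros x _. unfold gk. replace (0 ^ 2 * (1 + x ^ 2)) with 0 by ring.
      rewrite Ropp_0, exp_0. unfold Rdiv. ring. }
  rewrite (RInt_deriv atan).
  - rewrite atan_1, atan_0. ring.
  - intros x _. apply is_derive_Reals. apply derivable_pt_lim_atan.
  - intros x _. apply dcont. auto_derive. pose proof (pow2_ge_0 x). lra.
Qed.

Lemma gK_ge0 t : 0 <= gK t.
Proof.
  unfold gK, RI. apply RInt_ge_0. lra.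
  - apply exRc. intros. apply dcont. unfold gk. auto_derive. pose proof (pow2_ge_0 z). lra.
  - intros x _. unfold gk. apply Rlt_le, Rdiv_lt_0_compat. apply exp_pos. pose proof (pow2_ge_0 x). lra.
Qed.

Lemma gI_bound t : Rabs (gI t) <= sqrt PI / 2.
Proof.
  assert (HF : gF t = gF 0).
  { destruct (MVT_gen gF 0 t (fun _ => 0)) as [c [_ Hc]].
    - intros x _. apply gF_der.
    - intros x _. apply cpt_of. eexists. apply gF_der.
    - lra. }
  rewrite gF_0 in HF. unfold gF in HF. pose proof (gK_ge0 t).
  assert (Hs : (sqrt PI / 2) ^ 2 = PI / 4).
  { unfold Rdiv. rewrite Rpow_mult_distr. rewrite pow2_sqrt. field. left; apply PI_RGT_0. }
  assert (0 <= sqrt PI / 2). { pose proof (sqrt_pos PI). lra. }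
  apply Rabs_le. split; nra.
Qed.


Lemma gI_diff a b : RI (fun x => exp (- (x ^ 2))) a b = gI b - gI a.
Proof.
  unfold gI. rewrite <- (RInt_ChaslesR _ 0 a b).
  - ring.
  - apply exRc; intros; apply gauss_cont.
  - apply exRc; intros; apply gauss_cont.
Qed.

Lemma sqrt2PIv v : 0 < v -> sqrt (2 * PI * v) = sqrt PI * sqrt (2 * v).
Proof.
  intros Hv. rewrite <- sqrt_mult. f_equal. ring. left; apply PI_RGT_0. lra.
Qed.

Lemma gd_cont v z : continuous (gauss_density v) z.
Proof. unfold gauss_density. apply dcont. auto_derive. auto. Qed.

Lemma gd_pos v z : 0 < gauss_density v z.
Proof. unfold gauss_density. Abort.

Lemma gd_pos v z : 0 < v -> 0 < gauss_density v z.
Proof.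
  intros Hv. unfold gauss_density. apply Rdiv_lt_0_compat. apply exp_pos.
  apply sqrt_lt_R0. pose proof PI_RGT_0. nra.
Qed.

Lemma gd_le0 v z : 0 < v -> gauss_density v z <= gauss_density v 0.
Proof.
  intros Hv. unfold gauss_density. unfold Rdiv. apply Rmult_le_compat_r.
  apply Rlt_le, Rinv_0_lt_compat, sqrt_lt_R0. pose proof PI_RGT_0. nra.
  replace (- (0 ^ 2) * / (2 * v)) with 0 by (field; lra). rewrite exp_0.
  rewrite <- exp_0. apply exp_le_3 || idtac.
  destruct (Req_dec (- z ^ 2 * / (2 * v)) 0) as [e|ne]. rewrite e; lra.
  left. apply exp_increasing.
  assert (0 < / (2 * v)) by (apply Rinv_0_lt_compat; lra).
  assert (0 <= z ^ 2) by apply pow2_ge_0. nra.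
Qed.

Lemma gauss_total v L : 0 < v -> RI (gauss_density v) (- L) L <= 1.
Proof.
  intros Hv.
  assert (Hc : 0 < sqrt (2 * v)) by (apply sqrt_lt_R0; lra).
  set (c := sqrt (2 * v)) in *.
  assert (Hcc : c * c = 2 * v) by (unfold c; apply sqrt_sqrt; lra).
  assert (HS : 0 < sqrt PI) by (apply sqrt_lt_R0, PI_RGT_0).
  unfold gauss_density.
  rewrite (RInt_extR _ (fun z => / sqrt (2 * PI * v) * (c * (/ c * exp (- ((/ c * z + 0) ^ 2)))))).
  2:{ intros x _. unfold Rdiv. rewrite Rmult_comm. f_equal. field_simplify. f_equal. field_simplify.
      rewrite <- Hcc. field. all: lra. }
  rewrite RInt_scalR. rewrite RInt_scalR.
  - pose proof (RInt_comp_lin (V := R_CompleteNormedModule) (fun x => exp (- (x ^ 2))) (/ c) 0 (- L) L) as H.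
    assert (H' : RI (fun x => / c * exp (- (/ c * x + 0) ^ 2)) (-L) L =
       RI (fun x => exp (- x ^ 2)) (/ c * - L + 0) (/ c * L + 0)).
    { apply H. apply exRc; intros; apply gauss_cont. }
    rewrite H'.
    rewrite gI_diff. rewrite sqrt2PIv by lra. fold c.
    pose proof (gI_bound (/ c * L + 0)). pose proof (gI_bound (/ c * - L + 0)).
    apply Rabs_le_between in H0. apply Rabs_le_between in H1.
    apply Rmult_le_reg_l with (sqrt PI * c). nra.
    field_simplify; try lra. nra.
  - apply exRc; intros. apply dcont. auto_derive. auto.
  - apply exRc; intros. apply dcont. auto_derive. auto.
Qed.

Lemma RI_ge0 (f : R -> R) a b : a <= b -> (forall z, continuous f z) -> (forall z, 0 <= f z) -> 0 <= RI f a b.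
Proof. intros Hab Hc Hp. unfold RI. apply RInt_ge_0; auto. apply exRc; intros; apply Hc. Qed.

Lemma RI_le (f g : R -> R) a b : a <= b -> (forall z, continuous f z) -> (forall z, continuous g z) ->
  (forall z, a <= z <= b -> f z <= g z) -> RI f a b <= RI g a b.
Proof. intros Hab Hf Hg H. unfold RI. apply RInt_le; auto. apply exRc; intros; apply Hf.
  apply exRc; intros; apply Hg. intros; apply H; lra. Qed.

Lemma RI_window (f : R -> R) A C L : (forall z, continuous f z) -> (forall z, 0 <= f z) ->
  A <= C -> - L <= A -> C <= L -> RI f A C <= RI f (- L) L.
Proof.
  intros Hc Hp H1 H2 H3.
  assert (E : forall a b, ex_RInt f a b) by (intros; apply exRc; intros; apply Hc).
  rewrite <- (RInt_ChaslesR f (- L) A L) by auto.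
  rewrite <- (RInt_ChaslesR f A C L) by auto.
  pose proof (RI_ge0 f (- L) A H2 Hc Hp). pose proof (RI_ge0 f C L H3 Hc Hp). lra.
Qed.

Lemma gauss_m1 v L : 0 < v -> RI (fun z => z * gauss_density v z) (- L) L = 0.
Proof.
  intros Hv.
  rewrite (RInt_deriv (fun z => - v * gauss_density v z)).
  - unfold gauss_density. replace ((- L) ^ 2) with (L ^ 2) by ring. ring.
  - intros x _. unfold gauss_density. assert (0 < sqrt (2 * PI * v)) by (apply sqrt_lt_R0; pose proof PI_RGT_0; nra).
    auto_derive. lra. norm_exp. field. lra.
  - intros x _. apply dcont. unfold gauss_density. auto_derive. auto.
Qed.

Lemma gauss_m2 v L : 0 < v -> 0 <= L -> RI (fun z => z ^ 2 * gauss_density v z) (- L) L <= v.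
Proof.
  intros Hv HL.
  assert (Hs : 0 < sqrt (2 * PI * v)) by (apply sqrt_lt_R0; pose proof PI_RGT_0; nra).
  rewrite (RInt_extR _ (fun z => (z ^ 2 * gauss_density v z - v * gauss_density v z) + v * gauss_density v z))
    by (intros; ring).
  rewrite RInt_plusR.
  - rewrite RInt_scalR.
    + rewrite (RInt_deriv (fun z => - v * z * gauss_density v z)).
      * pose proof (gauss_total v L Hv).
        pose proof (gd_pos v L Hv). pose proof (gd_pos v (- L) Hv).
        assert (gauss_density v (- L) = gauss_density v L) by (unfold gauss_density; replace ((- L) ^ 2) with (L ^ 2) by ring; reflexivity).
        rewrite H2. assert (0 <= v * L * gauss_density v L) by (apply Rmult_le_pos; nra).
        assert (v * RI (gauss_density v) (- L) L <= v * 1) by (apply Rmult_le_compat_l; lra). lra.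
      * intros x _. unfold gauss_density. auto_derive. lra. norm_exp. field. lra.
      * intros x _. apply dcont. unfold gauss_density. auto_derive. auto.
    + apply exRc; intros; apply gd_cont.
  - apply exRc; intros. apply dcont. unfold gauss_density. auto_derive. auto.
  - apply exRc; intros. apply dcont. unfold gauss_density. auto_derive. auto.
Qed.

Lemma gauss_shift v m A C : 0 < v -> A <= C ->
  RI (fun x => x ^ 2 * gauss_density v (x - m)) A C <= v + m ^ 2.
Proof.
  intros Hv HAC.
  set (q := fun z => (z + m) ^ 2 * gauss_density v z).
  assert (Hqc : forall z, continuous q z).
  { intros z. apply dcont. unfold q, gauss_density. auto_derive. auto. }
  assert (H' : RI (fun x => x ^ 2 * gauss_density v (x - m)) A C = RI q (A - m) (C - m)).
  { pose proof (RInt_comp_lin (V := R_CompleteNormedModule) q 1 (- m) A C) as H.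
    replace (1 * A + - m) with (A - m) in H by ring.
    replace (1 * C + - m) with (C - m) in H by ring.
    rewrite (RInt_extR _ (fun y => 1 * q (1 * y + - m))).
    - apply H. apply exRc; intros; apply Hqc.
    - intros x _. unfold q. replace (1 * x + - m) with (x - m) by ring.
      replace (x - m + m) with x by ring. ring. }
  rewrite H'.
  set (L := Rabs (A - m) + Rabs (C - m)).
  assert (HL : 0 <= L) by (unfold L; pose proof (Rabs_pos (A - m)); pose proof (Rabs_pos (C - m)); lra).
  apply Rle_trans with (RI q (- L) L).
  - apply RI_window; auto.
    + intros z. unfold q. apply Rmult_le_pos. apply pow2_ge_0. left; apply gd_pos; auto.
    + lra.
    + unfold L. pose proof (Rabs_pos (C - m)). pose proof (Rle_abs (- (A - m))). rewrite Rabs_Ropp in H0. lra.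
    + unfold L. pose proof (Rabs_pos (A - m)). pose proof (Rle_abs (C - m)). lra.
  - assert (Ex : forall f : R -> R, (forall z, continuous f z) -> ex_RInt f (- L) L).
    { intros f Hf. apply exRc; intros; apply Hf. }
    rewrite (RInt_extR _ (fun z => (z ^ 2 * gauss_density v z + (2 * m) * (z * gauss_density v z)) + m ^ 2 * gauss_density v z)).
    2:{ intros x _. unfold q. ring. }
    rewrite RInt_plusR. rewrite RInt_plusR. rewrite RInt_scalR. rewrite RInt_scalR.
    + rewrite gauss_m1 by auto. pose proof (gauss_m2 v L Hv HL). pose proof (gauss_total v L Hv).
      pose proof (pow2_ge_0 m).
      assert (m ^ 2 * RI (gauss_density v) (- L) L <= m ^ 2 * 1) by (apply Rmult_le_compat_l; lra). lra.
    + apply Ex. apply gd_cont.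
    + apply Ex. intros z. apply dcont. unfold gauss_density. auto_derive. auto.
    + apply Ex. intros z. apply dcont. unfold gauss_density. auto_derive. auto.
    + apply Ex. intros z. apply dcont. unfold gauss_density. auto_derive. auto.
    + apply Ex. intros z. apply dcont. unfold gauss_density. auto_derive. auto.
    + apply Ex. intros z. apply dcont. unfold gauss_density. auto_derive. auto.
Qed.


Lemma c2_swap k x y : continuity_2d_pt k x y -> continuity_2d_pt (fun u v => k v u) y x.
Proof.
  unfold continuity_2d_pt, locally_2d. intros H eps. destruct (H eps) as [d Hd].
  exists d. intros u v H1 H2. apply Hd; auto.
Qed.

Lemma c2_to_1 k x y : continuity_2d_pt k x y -> continuity_pt (fun u => k u y) x.
Proof.
  intros H. unfold continuity_pt, continue_in, limit1_in, limit_in. simpl. unfold R_dist.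
  intros eps He. destruct (H (mkposreal eps He)) as [d Hd].
  exists d. split. apply cond_pos. intros u [_ Hu]. apply Hd; simpl; auto.
  rewrite Rminus_diag, Rabs_R0. apply cond_pos.
Qed.

Lemma cont_of_pt (f : R -> R) x : continuity_pt f x -> continuous f x.
Proof. intros H. apply (proj1 (continuity_pt_filterlim f x) H). Qed.

Lemma RInt_minusR (f g : R -> R) a b : ex_RInt f a b -> ex_RInt g a b ->
  RI (fun x => f x - g x) a b = RI f a b - RI g a b.
Proof. intros H1 H2. unfold RI. exact (@RInt_minus R_CompleteNormedModule f g a b H1 H2). Qed.

Lemma RI_abs_le (f : R -> R) a b M : (forall z, continuous f z) ->
  (forall x, Rmin a b <= x <= Rmax a b -> Rabs (f x) <= M) -> Rabs (RI f a b) <= Rabs (b - a) * M.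
Proof.
  intros Hc H. unfold RI.
  apply (@norm_RInt_le_const_abs R_NormedModule f a b); auto.
  apply (@RInt_correct R_CompleteNormedModule). apply exRc; intros; apply Hc.
Qed.

Lemma param_cont (k : R -> R -> R) a b c : (forall x y, continuity_2d_pt k x y) ->
  continuous (fun v => RI (fun x => k x v) a b) c.
Proof.
  intros Hk. apply cont_of_pt.
  unfold continuity_pt, continue_in, limit1_in, limit_in. simpl. unfold R_dist.
  intros eps He.
  assert (Hp : 0 < eps / (Rabs (b - a) + 1)) by (apply Rdiv_lt_0_compat; auto; pose proof (Rabs_pos (b - a)); lra).
  destruct (uniform_continuity_2d_1d k (Rmin a b) (Rmax a b) c (fun x _ => Hk x c) (mkposreal _ Hp)) as [d Hd].
  exists d. split. apply cond_pos. intros v [_ Hv].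
  assert (Hc1 : forall y z, continuous (fun x => k x y) z).
  { intros y z. apply cont_of_pt. apply c2_to_1. apply Hk. }
  rewrite <- RInt_minusR by (apply exRc; intros; apply Hc1).
  apply Rle_lt_trans with (Rabs (b - a) * (eps / (Rabs (b - a) + 1))).
  - apply RI_abs_le.
    + intros z. apply cminus; apply Hc1.
    + intros x Hx. left. simpl in Hd. apply (Hd x c x v); auto; try lra.
      * split; pose proof (cond_pos d); lra.
      * apply Rabs_def2 in Hv. lra.
      * rewrite Rminus_diag, Rabs_R0. apply cond_pos.
  - pose proof (Rabs_pos (b - a)).
    apply Rmult_lt_reg_r with (Rabs (b - a) + 1). lra.
    field_simplify; lra.
Qed.

Lemma RI_point (f : R -> R) a : RI f a a = 0.
Proof. unfold RI. rewrite RInt_point. reflexivity. Qed.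

Lemma RI_zero a b : RI (fun _ => 0) a b = 0.
Proof. unfold RI. rewrite RInt_const. unfold scal; simpl; unfold mult; simpl. ring. Qed.

Lemma fubini (k : R -> R -> R) a b c d : (forall x y, continuity_2d_pt k x y) ->
  RI (fun x => RI (fun t => k x t) c d) a b = RI (fun t => RI (fun x => k x t) a b) c d.
Proof.
  intros Hk.
  assert (Hc1 : forall y z, continuous (fun x => k x y) z).
  { intros y z. apply cont_of_pt. apply c2_to_1. apply Hk. }
  assert (Hc2 : forall y z, continuous (fun x => k y x) z).
  { intros y z. apply cont_of_pt. apply (c2_to_1 (fun u v => k v u)). apply c2_swap. apply Hk. }
  set (G := fun u => RI (fun t => k u t) c d).
  set (Phi := fun u => RI (fun t => RI (fun x => k x t) a u) c d).
  assert (HD : forall u, is_derive Phi u (G u)).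
  { intros u. unfold Phi, G.
    rewrite (RInt_extR (fun t => k u t) (fun t => Derive (fun z => RI (fun x => k x t) a z) u)).
    2:{ intros t _. symmetry. apply is_derive_unique. apply (is_derive_RInt0 (fun x => k x t)). apply Hc1. }
    unfold RI at 1 3.
    apply (is_derive_RInt_param (fun z t => RI (fun x => k x t) a z) c d u).
    - apply filter_forall. intros x0 t _. eexists. apply (is_derive_RInt0 (fun x => k x t)). apply Hc1.
    - intros t _. apply continuity_2d_pt_ext with (f := k).
      { intros x y. symmetry. apply is_derive_unique. apply (is_derive_RInt0 (fun x => k x y)). apply Hc1. }
      apply Hk.
    - apply filter_forall. intros y. apply exRc. intros z _.
      apply (param_cont k a y z). apply Hk. }
  assert (HG : forall u, continuous G u).
  { intros u. unfold G. apply (param_cont (fun t u => k u t)). intros x y. apply c2_swap. apply Hk. }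
  change (RI G a b = Phi b).
  rewrite (RInt_deriv Phi G a b).
  - unfold Phi at 2. rewrite (RInt_extR _ (fun _ => 0)).
    + rewrite RI_zero. ring.
    + intros. apply RI_point.
  - intros; apply HD.
  - intros; apply HG.
Qed.


Lemma improper_le f l K B0 : improper_int f l ->
  (forall B, B0 <= B -> RI f (- B) B <= K) -> l <= K.
Proof.
  intros [Hint Hlim] HB.
  destruct (Rle_or_lt l K) as [h|h]; auto.
  destruct (Hlim (l - K) ltac:(lra)) as [M HM].
  set (B := Rmax B0 (Rabs M)).
  destruct (Hint (- B) B) as [pr _].
  assert (H1 : - B <= - M) by (unfold B; pose proof (Rmax_r B0 (Rabs M)); pose proof (Rle_abs M); lra).
  assert (H2 : M <= B) by (unfold B; pose proof (Rmax_r B0 (Rabs M)); pose proof (Rle_abs M); lra).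
  specialize (HM (- B) B pr H1 H2).
  rewrite <- RInt_Reals in HM. fold (RI f (- B) B) in HM.
  specialize (HB B (Rmax_l _ _)).
  apply Rabs_def2 in HM. lra.
Qed.

Lemma ex_of_improper f l a b : improper_int f l -> ex_RInt f a b.
Proof. intros [H _]. destruct (H a b) as [pr _]. apply ex_RInt_Reals_1. exact pr. Qed.

Lemma sech2_cont_shift mu x z : continuous (fun y => sech2 ((x + y) / mu)) z.
Proof.
  apply (continuous_comp (fun y => (x + y) / mu) sech2).
  - apply dcont. auto_derive. auto.
  - apply sech2_cont_pt.
Qed.

Lemma g_bound mu b x gx T : 0 < mu -> 0 < b -> 0 <= T ->
  improper_int (fun y => integrand mu x y * gauss_density b y) gx ->
  gx <= x ^ 2 * (RI (fun t => sech2 (t / mu) * gauss_density b (t - x)) 0 T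
                 + gauss_density b 0 * (mu * (1 - tanh (T / mu)))).
Proof.
  intros Hmu Hb HT Himp.
  apply (improper_le _ _ _ (Rabs x + T) Himp).
  intros D HD.
  set (f := fun y => integrand mu x y * gauss_density b y).
  assert (Hx1 : - D <= - x) by (pose proof (Rle_abs x); lra).
  assert (Hx2 : - x <= D) by (pose proof (Rle_abs (- x)); rewrite Rabs_Ropp in H; lra).
  assert (exf : ex_RInt f (- D) D) by (apply (ex_of_improper _ _ _ _ Himp)).
  rewrite <- (RInt_ChaslesR f (- D) (- x) D).
  2:{ apply (ex_RInt_Chasles_1 f (- D) (- x) D); auto. }
  2:{ apply (ex_RInt_Chasles_2 f (- D) (- x) D); auto. }
  rewrite (RInt_extR f (fun _ => 0) (- D) (- x)).
  2:{ intros y Hy. rewrite Rmin_left in Hy by lra. rewrite Rmax_right in Hy by lra.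
      unfold f, integrand. destruct (Rlt_dec 0 (x + y)); [lra|]. ring. }
  rewrite RI_zero, Rplus_0_l.
  set (q := fun t => sech2 (t / mu) * gauss_density b (t - x)).
  assert (Hqc : forall z, continuous q z).
  { intros z. unfold q. apply cmult. apply sech2_cont_mu.
    apply (continuous_comp (fun t => t - x) (gauss_density b)). apply dcont; auto_derive; auto. apply gd_cont. }
  rewrite (RInt_extR f (fun y => x ^ 2 * q (1 * y + x)) (- x) D).
  2:{ intros y Hy. rewrite Rmin_left in Hy by lra. rewrite Rmax_right in Hy by lra.
      unfold f, q, integrand. destruct (Rlt_dec 0 (x + y)); [|lra].
      replace (1 * y + x) with (x + y) by ring. replace (x + y - x) with y by ring. unfold sech2. ring. }
  rewrite RInt_scalR.
  2:{ apply exRc. intros z _. apply (continuous_comp (fun y => 1 * y + x) q). apply dcont; auto_derive; auto. apply Hqc. }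
  assert (Hlin : RI (fun y => q (1 * y + x)) (- x) D = RI q 0 (x + D)).
  { pose proof (RInt_comp_lin (V := R_CompleteNormedModule) q 1 x (- x) D) as H.
    replace (1 * - x + x) with 0 in H by ring. replace (1 * D + x) with (x + D) in H by ring.
    rewrite (RInt_extR _ (fun y => 1 * q (1 * y + x))) by (intros; ring).
    apply H. apply exRc; intros; apply Hqc. }
  rewrite Hlin.
  assert (HTD : T <= x + D) by (pose proof (Rle_abs (- x)); rewrite Rabs_Ropp in H; lra).
  rewrite <- (RInt_ChaslesR q 0 T (x + D)) by (apply exRc; intros; apply Hqc).
  apply Rmult_le_compat_l. apply pow2_ge_0.
  apply Rplus_le_compat_l.
  apply Rle_trans with (RI (fun t => gauss_density b 0 * sech2 (t / mu)) T (x + D)).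
  - apply RI_le; auto.
    + intros z. apply cmult. apply dcont. auto_derive. auto. apply sech2_cont_mu.
    + intros z _. unfold q. rewrite Rmult_comm. apply Rmult_le_compat_r.
      left; apply sech2_pos. apply gd_le0; auto.
  - rewrite RInt_scalR. 2:{ apply exRc; intros; apply sech2_cont_mu. }
    rewrite RInt_sech2 by auto.
    apply Rmult_le_compat_l. left; apply gd_pos; auto.
    apply Rmult_le_compat_l. lra. pose proof (tanh_le1 ((x + D) / mu)). lra.
Qed.


Lemma pt_of_cont (f : R -> R) x : continuous f x -> continuity_pt f x.
Proof. intros H. apply (proj2 (continuity_pt_filterlim f x) H). Qed.

Lemma gauss_prod a b x t : 0 < a -> 0 < b ->
  gauss_density a x * gauss_density b (t - x) =
  gauss_density (a + b) t * gauss_density (a * b / (a + b)) (x - a / (a + b) * t).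
Proof.
  intros Ha Hb. unfold gauss_density.
  assert (HP := PI_RGT_0).
  assert (0 < a * b / (a + b)) by (apply Rdiv_lt_0_compat; nra).
  assert (S1 : 0 < sqrt (2 * PI * a)) by (apply sqrt_lt_R0; nra).
  assert (S2 : 0 < sqrt (2 * PI * b)) by (apply sqrt_lt_R0; nra).
  assert (S3 : 0 < sqrt (2 * PI * (a + b))) by (apply sqrt_lt_R0; nra).
  assert (S4 : 0 < sqrt (2 * PI * (a * b / (a + b)))) by (apply sqrt_lt_R0; nra).
  replace (exp (- x ^ 2 / (2 * a)) / sqrt (2 * PI * a) * (exp (- (t - x) ^ 2 / (2 * b)) / sqrt (2 * PI * b)))
    with (exp (- x ^ 2 / (2 * a) + - (t - x) ^ 2 / (2 * b)) / (sqrt (2 * PI * a) * sqrt (2 * PI * b)))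
    by (rewrite exp_plus; field; lra).
  replace (exp (- t ^ 2 / (2 * (a + b))) / sqrt (2 * PI * (a + b)) *
    (exp (- (x - a / (a + b) * t) ^ 2 / (2 * (a * b / (a + b)))) / sqrt (2 * PI * (a * b / (a + b)))))
    with (exp (- t ^ 2 / (2 * (a + b)) + - (x - a / (a + b) * t) ^ 2 / (2 * (a * b / (a + b)))) /
          (sqrt (2 * PI * (a + b)) * sqrt (2 * PI * (a * b / (a + b)))))
    by (rewrite exp_plus; field; lra).
  f_equal.
  - f_equal. field. lra.
  - rewrite <- !sqrt_mult by nra. f_equal. field. lra.
Qed.

Lemma c2_gd v f x y : continuity_2d_pt f x y -> continuity_2d_pt (fun u w => gauss_density v (f u w)) x y.
Proof. intros H. apply c2_comp; auto. apply pt_of_cont. apply gd_cont. Qed.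

Lemma c2_sech2 mu x y : continuity_2d_pt (fun u v => sech2 (v / mu)) x y.
Proof. apply c2_2. apply pt_of_cont. apply sech2_cont_mu. Qed.


Lemma q_c2 mu b x y : continuity_2d_pt (fun t x => sech2 (t / mu) * gauss_density b (t - x)) x y.
Proof.
  apply continuity_2d_pt_mult. apply c2_1. apply pt_of_cont. apply sech2_cont_mu.
  apply c2_gd. apply continuity_2d_pt_minus. apply continuity_2d_pt_id1. apply continuity_2d_pt_id2.
Qed.

Lemma K_c2 mu a b x y : continuity_2d_pt
  (fun x t => x ^ 2 * gauss_density a x * (sech2 (t / mu) * gauss_density b (t - x))) x y.
Proof.
  apply continuity_2d_pt_mult.
  - apply c2_1. apply pt_of_cont. apply cmult. apply dcont; auto_derive; auto. apply gd_cont.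
  - apply continuity_2d_pt_mult. apply c2_sech2.
    apply c2_gd. apply continuity_2d_pt_minus. apply continuity_2d_pt_id2. apply continuity_2d_pt_id1.
Qed.

Lemma main_T mu a b g B T : 0 < mu -> 0 < a -> 0 < b -> 0 <= B -> 0 <= T ->
  (forall x, improper_int (fun y => integrand mu x y * gauss_density b y) (g x)) ->
  ex_RInt (fun x => g x * gauss_density a x) (- B) B ->
  RI (fun x => g x * gauss_density a x) (- B) B <=
    gauss_density (a + b) 0 * (a * b / (a + b) * mu + (a / (a + b)) ^ 2 * mu ^ 3)
    + gauss_density b 0 * (mu * (1 - tanh (T / mu))) * a.
Proof.
  intros Hmu Ha Hb HB HT Hg Hex.
  set (cT := gauss_density b 0 * (mu * (1 - tanh (T / mu)))).
  set (q := fun x t => sech2 (t / mu) * gauss_density b (t - x)).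
  set (J := fun x => RI (fun t => q x t) 0 T).
  assert (HJc : forall z, continuous J z).
  { intros z. unfold J. apply (param_cont (fun t x => q x t)). intros; apply q_c2. }
  assert (Hpc : forall z, continuous (fun x => x ^ 2 * gauss_density a x) z).
  { intros z. apply cmult. apply dcont; auto_derive; auto. apply gd_cont. }
  apply Rle_trans with (RI (fun x => x ^ 2 * gauss_density a x * J x + cT * (x ^ 2 * gauss_density a x)) (- B) B).
  { unfold RI. apply RInt_le; auto. lra.
    - apply exRc; intros. apply cplus. apply cmult; auto. apply cmult. apply dcont; auto_derive; auto. auto.
    - intros x _. pose proof (g_bound mu b x (g x) T Hmu Hb HT (Hg x)).
      pose proof (gd_pos a x Ha). fold cT in H. unfold J, q.
      apply Rle_trans with (x ^ 2 * (RI (fun t => sech2 (t / mu) * gauss_density b (t - x)) 0 T + cT) * gauss_density a x).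
      + apply Rmult_le_compat_r; lra.
      + right; ring. }
  rewrite RInt_plusR.
  2:{ apply exRc; intros. apply cmult; auto. }
  2:{ apply (ex_RInt_scal (V := R_NormedModule)). apply exRc; intros; auto. }
  rewrite RInt_scalR by (apply exRc; intros; auto).
  assert (Hm2 : RI (fun x => x ^ 2 * gauss_density a x) (- B) B <= a) by (apply gauss_m2; auto).
  assert (HcT : 0 <= cT).
  { unfold cT. apply Rmult_le_pos. left; apply gd_pos; auto. apply Rmult_le_pos. lra.
    pose proof (tanh_le1 (T / mu)). lra. }
  assert (cT * RI (fun x => x ^ 2 * gauss_density a x) (- B) B <= cT * a) by (apply Rmult_le_compat_l; auto).
  apply Rplus_le_compat; [|lra].
  set (K := fun x t => x ^ 2 * gauss_density a x * (sech2 (t / mu) * gauss_density b (t - x))).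
  rewrite (RInt_extR _ (fun x => RI (fun t => K x t) 0 T)).
  2:{ intros x _. unfold J, K, q. rewrite RInt_scalR. reflexivity.
      apply exRc; intros. apply cont_of_pt. apply (c2_to_1 (fun t x => sech2 (t / mu) * gauss_density b (t - x)) z x).
      apply q_c2. }
  rewrite fubini by (intros; apply K_c2).
  set (s := a + b). set (tau := a * b / (a + b)). set (rho := a / (a + b)).
  apply Rle_trans with (RI (fun t => gauss_density s 0 * (tau * sech2 (t / mu) + rho ^ 2 * (sech2 (t / mu) * t ^ 2))) 0 T).
  - apply RI_le; auto.
    + intros z. apply (param_cont K). intros; apply K_c2.
    + intros z. apply cmult. apply dcont; auto_derive; auto. apply cplus. apply cmult.
      apply dcont; auto_derive; auto. apply sech2_cont_mu. apply cmult. apply dcont; auto_derive; auto.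
      apply cmult. apply sech2_cont_mu. apply dcont; auto_derive; auto.
    + intros t Ht. unfold K.
      rewrite (RInt_extR _ (fun x => (sech2 (t / mu) * gauss_density s t) * (x ^ 2 * gauss_density tau (x - rho * t)))).
      2:{ intros x _. unfold K, s, tau, rho. pose proof (gauss_prod a b x t Ha Hb) as Hp.
          replace (x ^ 2 * gauss_density a x * (sech2 (t / mu) * gauss_density b (t - x))) with
            (x ^ 2 * sech2 (t / mu) * (gauss_density a x * gauss_density b (t - x))) by ring.
          rewrite Hp. ring. }
      rewrite RInt_scalR.
      2:{ apply exRc; intros. apply cmult. apply dcont; auto_derive; auto.
          apply (continuous_comp (fun x => x - rho * t) (gauss_density tau)). apply dcont; auto_derive; auto. apply gd_cont. }
      assert (Htau : 0 < tau) by (unfold tau; apply Rdiv_lt_0_compat; nra).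
      assert (Hs : 0 < s) by (unfold s; lra).
      pose proof (gauss_shift tau (rho * t) (- B) B Htau ltac:(lra)).
      pose proof (sech2_pos (t / mu)). pose proof (gd_pos s t Hs). pose proof (gd_le0 s t Hs).
      apply Rle_trans with (sech2 (t / mu) * gauss_density s t * (tau + (rho * t) ^ 2)).
      * apply Rmult_le_compat_l; auto. nra.
      * assert (0 <= tau + (rho * t) ^ 2) by (pose proof (pow2_ge_0 (rho * t)); lra).
        apply Rle_trans with (sech2 (t / mu) * gauss_density s 0 * (tau + (rho * t) ^ 2)).
        -- apply Rmult_le_compat_r; auto. apply Rmult_le_compat_l; lra.
        -- right; ring.
  - rewrite RInt_scalR.
    2:{ apply exRc; intros. apply cplus. apply cmult. apply dcont; auto_derive; auto. apply sech2_cont_mu.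
        apply cmult. apply dcont; auto_derive; auto. apply cmult. apply sech2_cont_mu. apply dcont; auto_derive; auto. }
    rewrite RInt_plusR.
    2:{ apply exRc; intros. apply cmult. apply dcont; auto_derive; auto. apply sech2_cont_mu. }
    2:{ apply exRc; intros. apply cmult. apply dcont; auto_derive; auto. apply cmult. apply sech2_cont_mu. apply dcont; auto_derive; auto. }
    rewrite !RInt_scalR.
    2:{ apply exRc; intros. apply cmult. apply sech2_cont_mu. apply dcont; auto_derive; auto. }
    2:{ apply exRc; intros. apply sech2_cont_mu. }
    rewrite RInt_sech2 by auto. pose proof (sech2_sq_int mu T Hmu HT).
    replace (0 / mu) with 0 by (field; lra). rewrite tanh_0.
    assert (Htau : 0 <= tau) by (unfold tau; left; apply Rdiv_lt_0_compat; nra).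
    pose proof (tanh_le1 (T / mu)).
    assert (tau * (mu * (tanh (T / mu) - 0)) <= tau * mu) by (apply Rmult_le_compat_l; nra).
    assert (rho ^ 2 * RI (fun t => sech2 (t / mu) * t ^ 2) 0 T <= rho ^ 2 * mu ^ 3)
      by (apply Rmult_le_compat_l; auto; apply pow2_ge_0).
    apply Rmult_le_compat_l. left; apply gd_pos; unfold s; lra. unfold tau, rho, s in *. lra.
Qed.


Lemma improper_ge f l K B0 : improper_int f l ->
  (forall B, B0 <= B -> K <= RI f (- B) B) -> K <= l.
Proof.
  intros [Hint Hlim] HB.
  destruct (Rle_or_lt K l) as [h|h]; auto.
  destruct (Hlim (K - l) ltac:(lra)) as [M HM].
  set (B := Rmax B0 (Rabs M)).
  destruct (Hint (- B) B) as [pr _].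
  assert (H1 : - B <= - M) by (unfold B; pose proof (Rmax_r B0 (Rabs M)); pose proof (Rle_abs M); lra).
  assert (H2 : M <= B) by (unfold B; pose proof (Rmax_r B0 (Rabs M)); pose proof (Rle_abs M); lra).
  specialize (HM (- B) B pr H1 H2).
  rewrite <- RInt_Reals in HM. fold (RI f (- B) B) in HM.
  specialize (HB B (Rmax_l _ _)).
  apply Rabs_def2 in HM. lra.
Qed.

Lemma main_pos mu a b g E : 0 < mu -> 0 < a -> 0 < b ->
  (forall x, improper_int (fun y => integrand mu x y * gauss_density b y) (g x)) ->
  improper_int (fun x => g x * gauss_density a x) E ->
  E <= gauss_density (a + b) 0 * (a * b / (a + b) * mu + (a / (a + b)) ^ 2 * mu ^ 3).
Proof.
  intros Hmu Ha Hb Hg HE.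
  apply (improper_le _ _ _ 0 HE). intros B HB.
  set (M0 := gauss_density (a + b) 0 * (a * b / (a + b) * mu + (a / (a + b)) ^ 2 * mu ^ 3)).
  set (X := RI (fun x => g x * gauss_density a x) (- B) B).
  destruct (Rle_or_lt X M0) as [h|h]; auto.
  set (eta := X - M0).
  set (K := gauss_density b 0 * mu * a).
  assert (HK : 0 < K) by (unfold K; pose proof (gd_pos b 0 Hb); apply Rmult_lt_0_compat; [apply Rmult_lt_0_compat|]; lra).
  assert (He : 0 < eta) by (unfold eta; lra).
  set (T := mu * (K / eta)).
  assert (HT : 0 <= T) by (unfold T; apply Rmult_le_pos; [lra|]; left; apply Rdiv_lt_0_compat; auto).
  pose proof (main_T mu a b g B T Hmu Ha Hb HB HT Hg (ex_of_improper _ _ _ _ HE)) as Hm.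
  fold M0 X in Hm.
  pose proof (one_minus_tanh (T / mu) ltac:(apply Rmult_le_pos; auto; left; apply Rinv_0_lt_compat; auto)).
  replace (T / mu) with (K / eta) in H by (unfold T; field; lra).
  assert (Hb0 : 0 < gauss_density b 0) by (apply gd_pos; auto).
  assert (gauss_density b 0 * (mu * (1 - tanh (T / mu))) * a = K * (1 - tanh (T / mu))) by (unfold K; ring).
  replace (T / mu) with (K / eta) in H0 by (unfold T; field; lra).
  assert (K * (1 - tanh (K / eta)) <= K * (1 / (1 + K / eta))) by (apply Rmult_le_compat_l; lra).
  assert (K * (1 / (1 + K / eta)) < eta).
  { replace (K * (1 / (1 + K / eta))) with (K * eta / (eta + K)) by (field; split; lra).
    apply Rmult_lt_reg_r with (eta + K). lra. field_simplify; nra. }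
  replace (T / mu) with (K / eta) in Hm by (unfold T; field; lra).
  unfold eta in *. lra.
Qed.

Lemma alg1 mu a b : 0 < mu -> 0 < a -> 0 < b ->
  gauss_density (a + b) 0 * (a * b / (a + b) * mu + (a / (a + b)) ^ 2 * mu ^ 3) <=
  1 / sqrt (2 * PI) * (mu * a * b / (sqrt (a + b)) ^ 3)
       + 3 / (4 * sqrt (2 * PI)) * (a * mu ^ 3 / (sqrt (a + b)) ^ 5)
         * (3 * mu ^ 2 + 4 * a).
Proof.
  intros Hmu Ha Hb.
  assert (HP := PI_RGT_0).
  assert (Hp : 0 < sqrt (2 * PI)) by (apply sqrt_lt_R0; lra).
  assert (Hr : 0 < sqrt (a + b)) by (apply sqrt_lt_R0; lra).
  assert (Hrr : sqrt (a + b) * sqrt (a + b) = a + b) by (apply sqrt_sqrt; lra).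
  assert (HS : sqrt (2 * PI * (a + b)) = sqrt (2 * PI) * sqrt (a + b)) by (apply sqrt_mult; lra).
  unfold gauss_density. rewrite HS.
  replace (- 0 ^ 2 / (2 * (a + b))) with 0 by (field; lra). rewrite exp_0.
  set (p := sqrt (2 * PI)) in *. set (r := sqrt (a + b)) in *.
  rewrite <- Hrr.
  match goal with |- ?L <= ?R => assert (E : R - L = a * mu ^ 3 * (9 * mu ^ 2 + 8 * a) / (4 * p * r ^ 5)) end.
  { field. lra. }
  assert (0 <= a * mu ^ 3 * (9 * mu ^ 2 + 8 * a) / (4 * p * r ^ 5)).
  { apply Rlt_le, Rdiv_lt_0_compat. apply Rmult_lt_0_compat. apply Rmult_lt_0_compat; auto. apply pow_lt; auto.
    pose proof (pow2_ge_0 mu); lra. apply Rmult_lt_0_compat. lra. apply pow_lt; auto. }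
  lra.
Qed.

Lemma alg2 mu a : 0 < mu -> 0 < a ->
  gauss_density a 0 * mu ^ 3 <=
  1 / sqrt (2 * PI) * (mu * a * 0 / (sqrt (a + 0)) ^ 3)
       + 3 / (4 * sqrt (2 * PI)) * (a * mu ^ 3 / (sqrt (a + 0)) ^ 5)
         * (3 * mu ^ 2 + 4 * a).
Proof.
  intros Hmu Ha.
  assert (HP := PI_RGT_0).
  rewrite Rplus_0_r.
  assert (Hp : 0 < sqrt (2 * PI)) by (apply sqrt_lt_R0; lra).
  assert (Hr : 0 < sqrt a) by (apply sqrt_lt_R0; lra).
  assert (Hrr : sqrt a * sqrt a = a) by (apply sqrt_sqrt; lra).
  assert (HS : sqrt (2 * PI * a) = sqrt (2 * PI) * sqrt a) by (apply sqrt_mult; lra).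
  unfold gauss_density. rewrite HS.
  replace (- 0 ^ 2 / (2 * a)) with 0 by (field; lra). rewrite exp_0.
  set (p := sqrt (2 * PI)) in *. set (r := sqrt a) in *.
  rewrite <- Hrr.
  match goal with |- ?L <= ?R => assert (E : R - L = mu ^ 3 * (9 * mu ^ 2 + 8 * (r * r)) / (4 * p * r ^ 3)) end.
  { field. lra. }
  assert (0 <= mu ^ 3 * (9 * mu ^ 2 + 8 * (r * r)) / (4 * p * r ^ 3)).
  { apply Rlt_le, Rdiv_lt_0_compat. apply Rmult_lt_0_compat. apply pow_lt; auto.
    pose proof (pow2_ge_0 mu); nra. apply Rmult_lt_0_compat. lra. apply pow_lt; auto. }
  lra.
Qed.


Lemma case_b0 mu a g E : 0 < mu -> 0 < a ->
  (forall x, g x = integrand mu x 0) ->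
  improper_int (fun x => g x * gauss_density a x) E ->
  E <= gauss_density a 0 * mu ^ 3.
Proof.
  intros Hmu Ha Hg HE.
  apply (improper_le _ _ _ 0 HE). intros B HB.
  set (f := fun x => g x * gauss_density a x).
  assert (exf : ex_RInt f (- B) B) by (apply (ex_of_improper _ _ _ _ HE)).
  rewrite <- (RInt_ChaslesR f (- B) 0 B).
  2:{ apply (ex_RInt_Chasles_1 f (- B) 0 B); auto. lra. }
  2:{ apply (ex_RInt_Chasles_2 f (- B) 0 B); auto. lra. }
  rewrite (RInt_extR f (fun _ => 0) (- B) 0).
  2:{ intros y Hy. rewrite Rmin_left in Hy by lra. rewrite Rmax_right in Hy by lra.
      unfold f. rewrite Hg. unfold integrand. destruct (Rlt_dec 0 (y + 0)); [lra|]. ring. }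
  rewrite RI_zero, Rplus_0_l.
  rewrite (RInt_extR f (fun x => gauss_density a x * (sech2 (x / mu) * x ^ 2)) 0 B).
  2:{ intros y Hy. rewrite Rmin_left in Hy by lra. rewrite Rmax_right in Hy by lra.
      unfold f. rewrite Hg. unfold integrand. destruct (Rlt_dec 0 (y + 0)); [|lra].
      rewrite Rplus_0_r. unfold sech2. ring. }
  apply Rle_trans with (RI (fun x => gauss_density a 0 * (sech2 (x / mu) * x ^ 2)) 0 B).
  - apply RI_le; auto.
    + intros z. apply cmult. apply gd_cont. apply cmult. apply sech2_cont_mu. apply dcont; auto_derive; auto.
    + intros z. apply cmult. apply dcont; auto_derive; auto. apply cmult. apply sech2_cont_mu. apply dcont; auto_derive; auto.
    + intros z _. apply Rmult_le_compat_r. apply Rmult_le_pos. left; apply sech2_pos. apply pow2_ge_0.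
      apply gd_le0; auto.
  - rewrite RInt_scalR. 2:{ apply exRc; intros. apply cmult. apply sech2_cont_mu. apply dcont; auto_derive; auto. }
    apply Rmult_le_compat_l. left; apply gd_pos; auto. apply sech2_sq_int; auto.
Qed.

Theorem mainTheorem17 (mu sX2 sY2 : R) (g : R -> R) (E : R) :
  0 < mu -> 0 <= sX2 -> 0 <= sY2 -> 0 < sX2 + sY2 ->
  (forall x : R, gauss_expect sY2 (fun y => integrand mu x y) (g x)) ->
  gauss_expect sX2 g E ->
  E <= 1 / sqrt (2 * PI) * (mu * sX2 * sY2 / (sqrt (sX2 + sY2)) ^ 3)
       + 3 / (4 * sqrt (2 * PI)) * (sX2 * mu ^ 3 / (sqrt (sX2 + sY2)) ^ 5)
         * (3 * mu ^ 2 + 4 * sX2).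
Proof.
  intros Hmu Hx Hy Hs Hg HE.
  destruct HE as [[Hx0 HE0]|[Hxp HEi]].
  - assert (Hyp : 0 < sY2) by lra.
    assert (Hg0 : g 0 = 0).
    { destruct (Hg 0) as [[Hy0 _]|[_ Hi]]; [lra|].
      assert (Hz : forall B, RI (fun y => integrand mu 0 y * gauss_density sY2 y) (- B) B = 0).
      { intros B. rewrite (RInt_extR _ (fun _ => 0)). apply RI_zero. intros; unfold integrand; ring. }
      apply Rle_antisym.
      - apply (improper_le _ _ _ 0 Hi). intros B _. rewrite Hz. lra.
      - apply (improper_ge _ _ _ 0 Hi). intros B _. rewrite Hz. lra. }
    rewrite HE0, Hg0. rewrite Hx0.
    match goal with |- _ <= ?R => replace R with 0 by (unfold Rdiv; ring) end. lra.
  - destruct (Req_dec sY2 0) as [Hy0|Hyn].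
    + subst sY2. apply Rle_trans with (gauss_density sX2 0 * mu ^ 3).
      * apply (case_b0 mu sX2 g E); auto. intros x.
        destruct (Hg x) as [[_ Hgx]|[Hc _]]; [exact Hgx|lra].
      * apply alg2; auto.
    + apply Rle_trans with (gauss_density (sX2 + sY2) 0 * (sX2 * sY2 / (sX2 + sY2) * mu + (sX2 / (sX2 + sY2)) ^ 2 * mu ^ 3)).
      * apply (main_pos mu sX2 sY2 g E); auto. lra.
        intros x. destruct (Hg x) as [[Hc _]|[_ Hi]]; [lra|exact Hi].
      * apply alg1; auto. lra.
Qed.
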